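(* Let $\Bbbk$ be a commutative ring of global dimension zero, $C$ a $\Bbbk$-coalgebra and $M$ a right $C$-comodule finitely generated as a $\Bbbk$-module, with dual $M^*=\mathrm{Hom}_\Bbbk(M,\Bbbk)$. For every $C$-colinear $f\colon M\to M$, the colinear Hattori--Stallings trace $\mathrm{tr}^C(f)$ equals the image of $1\in\Bbbk$ under the composite \[\Bbbk\xrightarrow{\eta}M\square_CM^*\xrightarrow{f\square1}M\square_CM^*\cong\mathrm{coHH}_0(M^*\otimes M,C)\xrightarrow{\langle\epsilon\rangle}\mathrm{coHH}_0(C).\]
   Context: $M^*$ is a left $C$-comodule via $\alpha\mapsto(\alpha\otimes\mathrm{id}_C)\circ\rho\in\mathrm{Hom}_\Bbbk(M,C)\cong C\otimes M^*$. $\eta(1)=\sum_ie_i\otimes e_i^*$ for a basis $(e_i)$ and dual basis $(e_i^* )$ (corresponding to $\mathrm{id}_M$). The isomorphism $M\square_CM^*\cong\mathrm{coHH}_0(M^*\otimes M,C)$ is the swap $m\otimes\alpha\mapsto\alpha\otimes m$, where $\mathrm{coHH}_0(P,C)=\ker(\rho-\tilde t\lambda\colon P\to P\otimes C)$ for a $(C,C)$-bicomodule $P$. $\epsilon\colon M^*\otimes M\to C$ is the $C$-bicolinear map $\alpha\otimes m\mapsto\sum\alpha(m_{(0)})m_{(1)}$ and $\langle\epsilon\rangle$ its restriction. $\mathrm{tr}^C(f)=\sum_i\sum e_i^*(f(e_{i(0)}))e_{i(1)}\in\mathrm{coHH}_0(C)=\ker(\Delta-\tau\Delta)$. *)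

(* Defs.v *)
From HB Require Import structures.
From mathcomp Require Import all_boot all_order all_algebra.
Set Implicit Arguments. Unset Strict Implicit. Unset Printing Implicit Defensive.
Import GRing.Theory.
Local Open Scope ring_scope.

Section Defs.
Variable k : comPzRingType.

Definition bilinear_map (U V W : lmodType k) (f : U -> V -> W) : Prop :=
  (forall u, linear (f u)) /\ (forall v, linear (fun u => f u v)).

Definition projective_mod (P : lmodType k) : Prop :=
  forall (A B : lmodType k) (p : A -> B) (g : P -> B),
    linear p -> (forall b, exists a, p a = b) -> linear g ->
    exists h : P -> A, linear h /\ forall x, p (h x) = g x.

Definition gldim0 : Prop := forall P : lmodType k, projective_mod P.

Definition fingen (M : lmodType k) : Prop :=
  exists (n : nat) (g : 'I_n -> M),
    forall m, exists a : 'I_n -> k, m = \sum_(i < n) a i *: g i.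

(** A tensor product U (x)_k V, given by its universal property:
    a k-bilinear map tmul such that every k-bilinear map factors
    uniquely through a k-linear map (tlift). *)
Record tensor (U V : lmodType k) := Tensor {
  tT :> lmodType k;
  tmul : U -> V -> tT;
  tlift : forall W : lmodType k, (U -> V -> W) -> tT -> W;
  tmul_bilin : bilinear_map tmul;
  tlift_linear : forall (W : lmodType k) (f : U -> V -> W),
      bilinear_map f -> linear (tlift f);
  tlift_tmul : forall (W : lmodType k) (f : U -> V -> W),
      bilinear_map f -> forall u v, tlift f (tmul u v) = f u v;
  tensor_ext : forall (W : lmodType k) (g h : tT -> W), linear g -> linear h ->
      (forall u v, g (tmul u v) = h (tmul u v)) -> forall x, g x = h x
}.

(** The dual module M^* = Hom_k(M, k), given up to isomorphism by an
    evaluation pairing identifying it with the k-module of k-linear forms. *)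
Record dual (M : lmodType k) := Dual {
  dT :> lmodType k;
  dev : dT -> M -> k^o;
  dev_bilin : bilinear_map dev;
  dev_inj : forall a b : dT, (forall m, dev a m = dev b m) -> a = b;
  dev_surj : forall g : M -> k^o, linear g -> exists a : dT, forall m, dev a m = g m
}.

Definition coalgebra (C : lmodType k) (CC : tensor C C)
    (Delta : C -> CC) (eps : C -> k^o) : Prop :=
  [/\ linear Delta, linear eps,
      (* coassociativity, tested against all trilinear maps C x C x C -> W *)
      (forall (W : lmodType k) (t : C -> C -> C -> W),
         (forall a b, linear (t a b)) -> (forall a c, linear (fun b => t a b c)) ->
         (forall b c, linear (fun a => t a b c)) ->
         forall x,
         tlift (fun y c => tlift (fun a b => t a b c) (Delta y)) (Delta x)
         = tlift (fun a y => tlift (fun b c => t a b c) (Delta y)) (Delta x)),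
      (forall x, tlift (fun a b => eps a *: b) (Delta x) = x) &
      (forall x, tlift (fun a b => eps b *: a) (Delta x) = x)].

Definition rcomodule (C : lmodType k) (CC : tensor C C) (Delta : C -> CC)
    (eps : C -> k^o) (M : lmodType k) (MC : tensor M C) (rho : M -> MC) : Prop :=
  [/\ linear rho,
      (forall (W : lmodType k) (t : M -> C -> C -> W),
         (forall a b, linear (t a b)) -> (forall a c, linear (fun b => t a b c)) ->
         (forall b c, linear (fun a => t a b c)) ->
         forall x,
         tlift (fun y c => tlift (fun a b => t a b c) (rho y)) (rho x)
         = tlift (fun a y => tlift (fun b c => t a b c) (Delta y)) (rho x)) &
      (forall x, tlift (fun m c => eps c *: m) (rho x) = x)].

Definition colinear (C M : lmodType k) (MC : tensor M C) (rho : M -> MC)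
    (f : M -> M) : Prop :=
  linear f /\ forall m, rho (f m) = tlift (fun m' c => tmul MC (f m') c) (rho m).

Definition dual_basis (M : lmodType k) (Ms : dual M) (n : nat)
    (e : 'I_n -> M) (es : 'I_n -> Ms) : Prop :=
  forall x, x = \sum_(i < n) (dev (es i) x : k) *: e i.

Definition trC (C M : lmodType k) (MC : tensor M C) (rho : M -> MC)
    (Ms : dual M) (n : nat) (e : 'I_n -> M) (es : 'I_n -> Ms) (f : M -> M) : C :=
  \sum_(i < n) tlift (fun m c => (dev (es i) (f m) : k) *: c) (rho (e i)).

Definition eta1 (M : lmodType k) (Ms : dual M) (MMs : tensor M Ms)
    (n : nat) (e : 'I_n -> M) (es : 'I_n -> Ms) : MMs :=
  \sum_(i < n) tmul MMs (e i) (es i).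

(** f (x) 1 : M (x) M^* -> M (x) M^* (restricting to f box 1 on M box_C M^* ). *)
Definition tens_f1 (M : lmodType k) (Ms : dual M) (MMs : tensor M Ms)
    (f : M -> M) : MMs -> MMs :=
  tlift (fun m a => tmul MMs (f m) a).

Definition tswap (M : lmodType k) (Ms : dual M) (MMs : tensor M Ms)
    (MsM : tensor Ms M) : MMs -> MsM :=
  tlift (fun m a => tmul MsM a m).

Definition ev_eps (C M : lmodType k) (MC : tensor M C) (rho : M -> MC)
    (Ms : dual M) (MsM : tensor Ms M) : MsM -> C :=
  tlift (fun a m => tlift (fun m' c => (dev a m' : k) *: c) (rho m)).

End Defs.

(* Main.v *)
Require Import Defs.
From HB Require Import structures.
From mathcomp Require Import all_boot all_order all_algebra.
Local Open Scope ring_scope.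
Import GRing.Theory.

Set Implicit Arguments. Unset Strict Implicit.
Section Aux.
Variable k : comPzRingType.

Lemma linD' (U V : lmodType k) (f : U -> V) : linear f -> forall x y, f (x + y) = f x + f y.
Proof. by move=> lf x y; have := lf 1 x y; rewrite !scale1r. Qed.

Lemma lin0' (U V : lmodType k) (f : U -> V) : linear f -> f 0 = 0.
Proof. by move=> lf; rewrite -(subrr (0:U)) (zmod_morphism_linear lf) subrr. Qed.

Lemma linZ' (U V : lmodType k) (f : U -> V) : linear f -> forall a x, f (a *: x) = a *: f x.
Proof. by move=> lf; exact: (scalable_linear lf). Qed.

Lemma lin_sum' (U V : lmodType k) (f : U -> V) : linear f ->
  forall (I : Type) (r : seq I) (F : I -> U),
  f (\sum_(i <- r) F i) = \sum_(i <- r) f (F i).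
Proof.
move=> lf I r F; elim: r => [|x r IH]; first by rewrite !big_nil (lin0' lf).
by rewrite !big_cons (linD' lf) IH.
Qed.

Lemma mk_lin (U V : lmodType k) (f : U -> V) :
  (forall x y, f (x + y) = f x + f y) -> (forall a x, f (a *: x) = a *: f x) -> linear f.
Proof. by move=> D Z a u v; rewrite D Z. Qed.

Lemma tlift_family (U V W X : lmodType k) (T : tensor U V) (F : X -> U -> V -> W) :
  (forall a, bilinear_map (F a)) ->
  (forall u v, linear (fun a => F a u v)) ->
  forall y, linear (fun a => @tlift _ _ _ T _ (F a) y).
Proof.
move=> bF lF y s a b.
have lg := tlift_linear (t:=T) (bF (s *: a + b)).
have lA := tlift_linear (t:=T) (bF a).
have lB := tlift_linear (t:=T) (bF b).
apply: (tensor_ext (g := fun y => @tlift _ _ _ T _ (F (s *: a + b)) y)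
   (h := fun y => s *: @tlift _ _ _ T _ (F a) y + @tlift _ _ _ T _ (F b) y)) => //.
  apply: mk_lin => [x z|c x]; first by rewrite (linD' lA) (linD' lB) scalerDr addrACA.
  by rewrite (linZ' lA) (linZ' lB) scalerDr !scalerA mulrC.
by move=> u v; rewrite !tlift_tmul // lF.
Qed.

Lemma tlift_comp (U V U' V' W : lmodType k) (T : tensor U V) (T' : tensor U' V')
  (h : U -> V -> T') (phi : U' -> V' -> W) (psi : U -> V -> W) :
  bilinear_map h -> bilinear_map phi -> bilinear_map psi ->
  (forall u v, @tlift _ _ _ T' _ phi (h u v) = psi u v) ->
  forall y, @tlift _ _ _ T' _ phi (@tlift _ _ _ T _ h y) = @tlift _ _ _ T _ psi y.
Proof.
move=> bh bphi bpsi E y.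
have l1 := tlift_linear (t:=T') bphi; have l2 := tlift_linear (t:=T) bh.
apply: (tensor_ext (g := fun y => @tlift _ _ _ T' _ phi (@tlift _ _ _ T _ h y))) => //.
- by move=> a u v; rewrite l2 l1.
- exact: tlift_linear.
by move=> u v; rewrite !tlift_tmul.
Qed.

End Aux.

Theorem proposition6p5
  (k : comPzRingType) (hk : gldim0 k)
  (C : lmodType k) (CC : tensor C C) (Delta : C -> CC) (epsC : C -> k^o)
  (hC : coalgebra Delta epsC)
  (M : lmodType k) (MC : tensor M C) (rho : M -> MC)
  (hM : rcomodule Delta epsC rho) (hfg : fingen M)
  (Ms : dual M) (MMs : tensor M Ms) (MsM : tensor Ms M)
  (n : nat) (e : 'I_n -> M) (es : 'I_n -> Ms) (hdb : dual_basis e es)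
  (f : M -> M) (hf : colinear rho f) :
  trC rho e es f = ev_eps rho (tswap MsM (tens_f1 f (eta1 MMs e es))).
Proof.
case: hf => lf hf.
case: hM => lrho _ _.
have [dl dr] := dev_bilin Ms.
have [t1 t2] := tmul_bilin MMs.
have [s1 s2] := tmul_bilin MsM.
have [c1 c2] := tmul_bilin MC.
have bdc : forall a : Ms, bilinear_map (fun (m : M) (c : C) => (dev a m : k) *: c).
  move=> a; split=> [m|c].
    by move=> s x y; rewrite scalerDr !scalerA mulrC.
  by move=> s x y /=; rewrite (linD' (dl a)) (linZ' (dl a)) scalerDl scalerA.
have bdfc : forall a : Ms, bilinear_map (fun (m : M) (c : C) => (dev a (f m) : k) *: c).
  move=> a; split=> [m|c].
    by move=> s x y; rewrite scalerDr !scalerA mulrC.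
  by move=> s x y /=; rewrite (linD' lf) (linZ' lf) (linD' (dl a)) (linZ' (dl a)) scalerDl scalerA.
have bf1 : bilinear_map (fun (m : M) (a : Ms) => tmul MMs (f m) a).
  split=> [m|a]; first exact: t1.
  by move=> s x y /=; rewrite (linD' lf) (linZ' lf) (linD' (t2 a)) (linZ' (t2 a)).
have bsw : bilinear_map (fun (m : M) (a : Ms) => tmul MsM a m).
  by split=> [m|a]; [exact: s2 | exact: s1].
have bfC : bilinear_map (fun (m : M) (c : C) => tmul MC (f m) c).
  split=> [m|c]; first exact: c1.
  by move=> s x y /=; rewrite (linD' lf) (linZ' lf) (linD' (c2 c)) (linZ' (c2 c)).
have bev : bilinear_map (fun (a : Ms) (m : M) =>
     tlift (fun m' c => (dev a m' : k) *: c) (rho m)).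
  split=> [a|m].
    move=> s x y /=; have la := tlift_linear (t:=MC) (bdc a).
    by rewrite lrho (linD' la) (linZ' la).
  apply: (tlift_family (F := fun (a : Ms) (m' : M) (c : C) => (dev a m' : k) *: c)) => //.
  move=> u v s x y /=.
  have -> : dev (s *: x + y) u = s * dev x u + dev y u by rewrite (dr u).
  by rewrite scalerDl scalerA.
rewrite /trC /ev_eps /tswap /tens_f1 /eta1.
rewrite (lin_sum' (tlift_linear bf1)) (lin_sum' (tlift_linear bsw)).
rewrite (lin_sum' (tlift_linear bev)).
apply: eq_bigr => i _.
rewrite tlift_tmul // tlift_tmul // tlift_tmul //= hf.
idtac.
symmetry; apply: tlift_comp => // u v.
by rewrite tlift_tmul.
Qed.
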